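(* Let $x\in(0,1)$ be irrational with regular continued fraction $x=[0;d_1,d_2,\dots]$, and let $\tau=G^2(x)=[0;d_3,d_4,\dots]$. Then: (i) if $d_1$ is odd and $\tau\in[\frac12,1)$, the OOCF expansion of $x$ begins with $(2,-1)$ repeated $\frac{d_1-1}{2}$ times followed by $(d_2+1,1)$, and $T^{\frac{d_1-1}{2}+1}(x)=F(\tau)$; (ii) if $d_1$ is odd and $\tau\in[0,\frac12)$, the OOCF expansion of $x$ begins with $(2,-1)$ repeated $\frac{d_1-1}{2}$ times followed by $(d_2+2,-1)$, and $T^{\frac{d_1-1}{2}+1}(x)=F(\tau)$; (iii) if $d_1$ is even, the OOCF expansion of $x$ begins with $(2,-1)$ repeated $\frac{d_1}{2}-1$ times followed by $(1,1)$, and $T^{\frac{d_1}{2}}(x)=G(x)$.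
   Context: $[0;d_1,d_2,\dots]=\cfrac{1}{d_1+\cfrac{1}{d_2+\cdots}}$ is the regular continued fraction. Gauss map $G(x)=\{1/x\}$ (fractional part) for $x\in(0,1]$, $G(0)=0$. Farey map $F(x)=\frac{x}{1-x}$ for $0\le x\le\frac12$, $F(x)=\frac{1-x}{x}$ for $\frac12\le x\le1$. OOCF: digits $D=\{(1,1)\}\cup\{(a,\varepsilon):a\ge2,\ \varepsilon=\pm1\}$; $B(k+1,-1)=[\frac{k-1}{k},\frac{2k-1}{2k+1}]$, $B(k,1)=[\frac{2k-1}{2k+1},\frac{k}{k+1}]$ ($k\ge1$); the OOCF map is $T(x)=\frac{kx-(k-1)}{k-(k+1)x}$ on $B(k+1,-1)$, $T(x)=\frac{k-(k+1)x}{kx-(k-1)}$ on $B(k,1)$, $T(1)=1$. The OOCF expansion of irrational $x\in(0,1)$ is the unique sequence $(a_n,\varepsilon_n)\in D$ with $T^{n-1}(x)\in B(a_n,\varepsilon_n)$ for all $n\ge1$. *)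

(* Defs.v *)
From Stdlib Require Import Reals Lra Lia ZArith Arith.
Open Scope R_scope.

Definition irrational (x : R) : Prop :=
  ~ exists (p q : Z), q <> 0%Z /\ x = IZR p / IZR q.

Definition gauss (x : R) : R :=
  if Req_EM_T x 0 then 0 else frac_part (/ x).

(* n-th regular continued fraction digit (n >= 1):
   d_n = floor (1 / G^(n-1)(x)), so that x = [0; d_1, d_2, ...]. *)
Definition cf_digit (x : R) (n : nat) : nat :=
  Z.to_nat (Int_part (/ Nat.iter (n - 1) gauss x)).

Definition farey (x : R) : R :=
  if Rle_dec x (1/2) then x / (1 - x) else (1 - x) / x.

(* OOCF digit set D = {(1,1)} U {(a,eps) : a >= 2, eps = +-1} and
   cylinder intervals B(a,eps):
     B(k+1,-1) = [(k-1)/k, (2k-1)/(2k+1)],  B(k,1) = [(2k-1)/(2k+1), k/(k+1)]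
   for k >= 1. *)
Definition in_B (a : nat) (eps : Z) (y : R) : Prop :=
  (eps = (-1)%Z /\ (2 <= a)%nat /\
     let k := INR (a - 1) in (k - 1) / k <= y <= (2 * k - 1) / (2 * k + 1))
  \/
  (eps = 1%Z /\ (1 <= a)%nat /\
     let k := INR a in (2 * k - 1) / (2 * k + 1) <= y <= k / (k + 1)).

Definition in_D (d : nat * Z) : Prop :=
  (fst d = 1%nat /\ snd d = 1%Z) \/
  ((2 <= fst d)%nat /\ (snd d = 1%Z \/ snd d = (-1)%Z)).

(* For y in [0,1), k = floor(1/(1-y)) is the unique
   k >= 1 with y in [(k-1)/k, k/(k+1)) = B(k+1,-1) U B(k,1) (minus the right
   end point).  The two branch formulas agree at common end points. T(1)=1. *)
Definition oocf_T (y : R) : R :=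
  if Rle_dec 1 y then 1 else
  let k := IZR (Int_part (/ (1 - y))) in
  if Rle_dec y ((2 * k - 1) / (2 * k + 1))
  then (k * y - (k - 1)) / (k - (k + 1) * y)
  else (k - (k + 1) * y) / (k * y - (k - 1)).

(* s is the OOCF expansion of x.  Indexing is 0-based: s n is the (n+1)-th
   digit (a_{n+1}, eps_{n+1}), characterised by T^n(x) in B(s n). *)
Definition is_oocf_expansion (x : R) (s : nat -> nat * Z) : Prop :=
  forall n : nat, in_D (s n) /\ in_B (fst (s n)) (snd (s n)) (Nat.iter n oocf_T x).

(* Main.v *)
Require Import Defs.
From Stdlib Require Import Reals ZArith Arith Lra Lia Psatz.
Open Scope R_scope.

Lemma Int_part_eq (z : Z) (r : R) : IZR z <= r -> r < IZR z + 1 -> Int_part r = z.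
Proof.
  intros H1 H2. unfold Int_part.
  assert (up r = (z + 1)%Z). { symmetry. apply tech_up; rewrite plus_IZR; lra. }
  lia.
Qed.

Lemma div_le_iff a b c d : 0 < b -> 0 < d -> (a / b <= c / d <-> a * d <= c * b).
Proof.
  intros Hb Hd.
  assert (E : a * d - c * b = (a / b - c / d) * (b * d)) by (field; lra).
  assert (Hbd : 0 < b*d) by nra.
  split; intro HH.
  - nra.
  - apply Rnot_lt_le; intro H'. nra.
Qed.

Lemma inB_char a e w : 1 < w ->
  (in_B a e ((w-1)/w) <->
   (e = (-1)%Z /\ (2 <= a)%nat /\ INR (a-1) <= w <= INR (a-1) + 1/2) \/
   (e = 1%Z /\ (1 <= a)%nat /\ INR a + 1/2 <= w <= INR a + 1)).
Proof.
  intros Hw. unfold in_B. cbv zeta.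
  split; intros [[He [Ha [H1 H2]]] | [He [Ha [H1 H2]]]].
  - left. repeat split; auto.
    + pose proof (le_INR 1 (a-1) ltac:(lia)). simpl in *.
      rewrite div_le_iff in H1 by lra. nra.
    + pose proof (le_INR 1 (a-1) ltac:(lia)). simpl in *.
      rewrite div_le_iff in H2 by lra. nra.
  - right. repeat split; auto.
    + pose proof (le_INR 1 a ltac:(lia)). simpl in *.
      rewrite div_le_iff in H1 by lra. nra.
    + pose proof (le_INR 1 a ltac:(lia)). simpl in *.
      rewrite div_le_iff in H2 by lra. nra.
  - left. pose proof (le_INR 1 (a-1) ltac:(lia)). simpl in *.
    repeat split; auto; rewrite div_le_iff by lra; nra.
  - right. pose proof (le_INR 1 a ltac:(lia)). simpl in *.
    repeat split; auto; rewrite div_le_iff by lra; nra.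
Qed.

Lemma T_w (w : R) (z : Z) : 1 < w -> 1 <= IZR z -> IZR z <= w < IZR z + 1 ->
  oocf_T ((w-1)/w) = if Rle_dec w (IZR z + 1/2) then (w - IZR z)/(IZR z + 1 - w)
                     else (IZR z + 1 - w)/(w - IZR z).
Proof.
  intros Hw Hz [H1 H2]. unfold oocf_T.
  destruct (Rle_dec 1 ((w-1)/w)) as [H|H].
  { exfalso. assert ((w-1)/w = 1 - /w) by (field; lra).
    assert (0 < /w) by (apply Rinv_0_lt_compat; lra). lra. }
  replace (/ (1 - (w-1)/w)) with w by (field; lra).
  rewrite (Int_part_eq z w) by lra.
  set (k := IZR z) in *.
  destruct (Rle_dec w (k + 1/2)) as [Hb|Hb];
  destruct (Rle_dec ((w-1)/w) ((2*k-1)/(2*k+1))) as [Hc|Hc].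
  - field; split; lra.
  - exfalso; apply Hc. rewrite div_le_iff by lra. nra.
  - exfalso; rewrite div_le_iff in Hc by lra. nra.
  - field; split; lra.
Qed.

Lemma nat_close (p q : nat) : INR p < INR q + 1 -> INR q < INR p + 1 -> p = q.
Proof.
  intros H1 H2. destruct (lt_eq_lt_dec p q) as [[h|h]|h]; auto.
  - apply le_INR in h. rewrite S_INR in h. lra.
  - apply le_INR in h. rewrite S_INR in h. lra.
Qed.

Lemma nat_between (p q : nat) : INR q < INR p -> INR p < INR q + 1 -> False.
Proof.
  intros H1 H2. destruct (lt_eq_lt_dec p q) as [[h|h]|h].
  - apply lt_INR in h. lra.
  - subst; lra.
  - apply le_INR in h. rewrite S_INR in h. lra.
Qed.

Lemma irr_inv x : x <> 0 -> irrational x -> irrational (/x).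
Proof.
  intros Hx H [p [q [Hq E]]]. apply H.
  assert (IZR p <> 0). { intro Hp. rewrite Hp in E. unfold Rdiv in E. rewrite Rmult_0_l in E.
    apply (Rinv_neq_0_compat x Hx). exact E. }
  exists q, p. split. { intro; subst; apply H0; reflexivity. }
  rewrite <- (Rinv_inv x), E. field. split; auto. apply not_0_IZR; auto.
Qed.

Lemma irr_sub x n : irrational x -> irrational (x - INR n).
Proof.
  intros H [p [q [Hq E]]]. apply H.
  exists (p + Z.of_nat n * q)%Z, q. split; auto.
  rewrite plus_IZR, mult_IZR, <- INR_IZR_INZ.
  assert (IZR q <> 0) by (apply not_0_IZR; auto).
  replace x with (x - INR n + INR n) by ring. rewrite E. field; auto.
Qed.

Lemma irr_ne x p q : irrational x -> q <> 0%Z -> x <> IZR p / IZR q.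
Proof. intros H Hq E. apply H. exists p, q. auto. Qed.

Lemma digit_bounds r : 0 <= r -> INR (Z.to_nat (Int_part r)) <= r < INR (Z.to_nat (Int_part r)) + 1.
Proof.
  intros Hr. destruct (base_Int_part r) as [H1 H2].
  assert (0 <= Int_part r)%Z.
  { assert (-1 < Int_part r)%Z; [|lia]. apply lt_IZR. lra. }
  rewrite INR_IZR_INZ, Z2Nat.id by auto. lra.
Qed.

Lemma gauss_eq x : 0 < x -> gauss x = /x - INR (Z.to_nat (Int_part (/x))).
Proof.
  intros Hx. unfold gauss. destruct (Req_EM_T x 0); [lra|].
  unfold frac_part.
  assert (0 < /x) by (apply Rinv_0_lt_compat; lra).
  destruct (base_Int_part (/x)) as [H1 H2].
  assert (0 <= Int_part (/x))%Z.
  { assert (-1 < Int_part (/x))%Z; [|lia]. apply lt_IZR. lra. }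
  rewrite INR_IZR_INZ, Z2Nat.id; auto.
Qed.

Lemma step c : 3 < c ->
  in_B 2 (-1) (/c) /\ (forall a e, in_B a e (/c) -> (a, e) = (2%nat, (-1)%Z)) /\
  oocf_T (/c) = /(c-2).
Proof.
  intros Hc.
  set (w := c/(c-1)).
  assert (Hw1 : 1 < w /\ w < 3/2).
  { unfold w. split.
    - apply Rmult_lt_reg_r with (c-1); [lra|]. unfold Rdiv. rewrite Rmult_assoc, Rinv_l; lra.
    - apply Rmult_lt_reg_r with (c-1); [lra|]. unfold Rdiv. rewrite Rmult_assoc, Rinv_l; lra. }
  assert (Ey : /c = (w-1)/w) by (unfold w; field; lra).
  rewrite Ey. split; [|split].
  - apply inB_char; [lra|]. left. simpl. repeat split; try lia; lra.
  - intros a e H. apply inB_char in H; [|lra].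
    destruct H as [[He [Ha [H1 H2]]]|[He [Ha [H1 H2]]]].
    + subst. f_equal. assert (a - 1 = 1)%nat; [|lia].
      apply nat_close; simpl; pose proof (le_INR 1 (a-1) ltac:(lia)); simpl in *; lra.
    + exfalso. pose proof (le_INR 1 a ltac:(lia)); simpl in *; lra.
  - rewrite (T_w w 1) by (simpl; lra).
    destruct (Rle_dec w (IZR 1 + 1/2)); [|simpl in *; lra].
    unfold w. simpl. field. lra.
Qed.

Lemma iter_step x : 0 < x -> forall i, 2 * INR i < /x - 1 ->
  Nat.iter i oocf_T x = /(/x - 2 * INR i).
Proof.
  intros Hx. induction i; intros H.
  - simpl. rewrite Rmult_0_r, Rminus_0_r, Rinv_inv. reflexivity.
  - rewrite S_INR in H. simpl Nat.iter. rewrite IHi by lra.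
    destruct (step (/x - 2 * INR i)) as [_ [_ E]]; [lra|]. rewrite E, S_INR.
    f_equal. ring.
Qed.

Theorem theorem5p3 (x : R) (hx0 : 0 < x) (hx1 : x < 1) (hirr : irrational x) :
  let d1 := cf_digit x 1 in
  let d2 := cf_digit x 2 in
  let tau := Nat.iter 2 gauss x in
  (* (i) *)
  (Nat.odd d1 = true -> 1/2 <= tau < 1 ->
     let m := ((d1 - 1) / 2)%nat in
     (forall i : nat, (i < m)%nat -> in_B 2 (-1) (Nat.iter i oocf_T x)) /\
     in_B (d2 + 1) 1 (Nat.iter m oocf_T x) /\
     (forall s, is_oocf_expansion x s ->
        (forall i : nat, (i < m)%nat -> s i = (2%nat, (-1)%Z)) /\
        s m = ((d2 + 1)%nat, 1%Z)) /\
     Nat.iter (m + 1) oocf_T x = farey tau) /\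
  (* (ii) *)
  (Nat.odd d1 = true -> 0 <= tau < 1/2 ->
     let m := ((d1 - 1) / 2)%nat in
     (forall i : nat, (i < m)%nat -> in_B 2 (-1) (Nat.iter i oocf_T x)) /\
     in_B (d2 + 2) (-1) (Nat.iter m oocf_T x) /\
     (forall s, is_oocf_expansion x s ->
        (forall i : nat, (i < m)%nat -> s i = (2%nat, (-1)%Z)) /\
        s m = ((d2 + 2)%nat, (-1)%Z)) /\
     Nat.iter (m + 1) oocf_T x = farey tau) /\
  (* (iii) *)
  (Nat.even d1 = true ->
     let m := (d1 / 2 - 1)%nat in
     (forall i : nat, (i < m)%nat -> in_B 2 (-1) (Nat.iter i oocf_T x)) /\
     in_B 1 1 (Nat.iter m oocf_T x) /\
     (forall s, is_oocf_expansion x s ->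
        (forall i : nat, (i < m)%nat -> s i = (2%nat, (-1)%Z)) /\
        s m = (1%nat, 1%Z)) /\
     Nat.iter (d1 / 2) oocf_T x = gauss x).
Proof.
  intros d1 d2 tau.
  assert (Hxne : x <> 0) by lra.
  assert (Hr : 1 < /x).
  { rewrite <- Rinv_1. apply Rinv_lt_contravar; lra. }
  assert (Hd1 : d1 = Z.to_nat (Int_part (/x))) by reflexivity.
  pose proof (digit_bounds (/x) ltac:(lra)) as Hb1. rewrite <- Hd1 in Hb1.
  set (f := gauss x).
  assert (Hf : f = /x - INR d1) by (unfold f; rewrite gauss_eq, <- Hd1; auto).
  assert (Hirr1 : irrational (/x)) by (apply irr_inv; auto).
  assert (Hirrf : irrational f) by (rewrite Hf; apply irr_sub; auto).
  assert (Hf0 : f <> 0).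
  { intro E. apply (irr_ne f 0 1 Hirrf ltac:(lia)). rewrite E. simpl. field. }
  assert (Hfpos : 0 < f < 1) by lra.
  assert (Hd2 : d2 = Z.to_nat (Int_part (/f))) by reflexivity.
  assert (Hrf : 1 < /f).
  { rewrite <- Rinv_1. apply Rinv_lt_contravar; lra. }
  pose proof (digit_bounds (/f) ltac:(lra)) as Hb2. rewrite <- Hd2 in Hb2.
  assert (Htau : tau = /f - INR d2) by (unfold tau; simpl; fold f; rewrite gauss_eq, <- Hd2; lra).
  assert (Hirrt : irrational tau) by (rewrite Htau; apply irr_sub; apply irr_inv; auto).
  assert (Ht0 : tau <> 0).
  { intro E. apply (irr_ne tau 0 1 Hirrt ltac:(lia)). rewrite E. simpl. field. }
  assert (Ht12 : tau <> 1/2).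
  { intro E. apply (irr_ne tau 1 2 Hirrt ltac:(lia)). rewrite E. reflexivity. }
  assert (Htb : 0 < tau < 1) by lra.
  assert (Hd2p : INR (d2 + 1) = INR d2 + 1) by (rewrite plus_INR; simpl; lra).
  assert (Hd2p2 : INR (d2 + 2 - 1) = INR d2 + 1).
  { replace (d2 + 2 - 1)%nat with (d2 + 1)%nat by lia. auto. }
  assert (Hodd : Nat.odd d1 = true ->
     exists m0, ((d1 - 1)/2)%nat = m0 /\ INR d1 = 2 * INR m0 + 1).
  { intro H. apply Nat.odd_spec in H. destruct H as [m0 Hm0]. exists m0. split.
    - rewrite Hm0. replace (2*m0+1-1)%nat with (m0*2)%nat by lia. apply Nat.div_mul. lia.
    - rewrite Hm0, plus_INR, mult_INR. simpl. lra. }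
  assert (Hpre : forall m0, 2 * INR m0 + 1 <= INR d1 ->
     (forall i, (i < m0)%nat -> in_B 2 (-1) (Nat.iter i oocf_T x)) /\
     (forall s, is_oocf_expansion x s -> forall i, (i < m0)%nat -> s i = (2%nat, (-1)%Z))).
  { intros m0 Hm0.
    assert (Hc : forall i, (i < m0)%nat -> 3 < /x - 2 * INR i /\
               Nat.iter i oocf_T x = /(/x - 2 * INR i)).
    { intros i Hi. apply le_INR in Hi. rewrite S_INR in Hi.
      split; [lra|]. apply iter_step; auto; lra. }
    split.
    - intros i Hi. destruct (Hc i Hi) as [H1 H2]. rewrite H2. apply (step _ H1).
    - intros s Hs i Hi. destruct (Hc i Hi) as [H1 H2]. destruct (Hs i) as [_ HB].
      destruct (s i) as [a e]. simpl in HB. rewrite H2 in HB. apply (step _ H1). exact HB. }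
  split; [|split].
  -
    intros Hod Ht. destruct (Hodd Hod) as [m0 [Hm Hd1m]]. cbv zeta. rewrite Hm.
    destruct (Hpre m0 ltac:(lra)) as [P1 P2].
    set (w := 1 + /f).
    assert (Hy : Nat.iter m0 oocf_T x = (w - 1)/w).
    { rewrite iter_step by (auto; lra). replace (/x - 2 * INR m0) with (1 + f) by lra.
      unfold w. field. lra. }
    assert (Hw : w = INR (d2 + 1) + tau) by (unfold w; lra).
    split; [|split; [|split]].
    + exact P1.
    + rewrite Hy. apply inB_char; [lra|]. right. repeat split; try lia; lra.
    + intros s Hs. split; [apply P2; auto|].
      destruct (Hs m0) as [_ HB]. destruct (s m0) as [a e]. simpl in HB.
      rewrite Hy in HB. apply inB_char in HB; [|lra].
      destruct HB as [[He [Ha [H1 H2]]]|[He [Ha [H1 H2]]]].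
      * exfalso. apply (nat_between (a-1) (d2+1)); lra.
      * subst e. f_equal. apply nat_close; lra.
    + rewrite Nat.add_1_r. simpl Nat.iter. rewrite Hy.
      rewrite (T_w w (Z.of_nat (d2 + 1))); rewrite <- ?INR_IZR_INZ; try lra.
      destruct (Rle_dec w (INR (d2 + 1) + 1 / 2)); [lra|].
      unfold farey. destruct (Rle_dec tau (1/2)); [lra|]. rewrite Hw. field. lra.
  -
    intros Hod Ht. destruct (Hodd Hod) as [m0 [Hm Hd1m]]. cbv zeta. rewrite Hm.
    destruct (Hpre m0 ltac:(lra)) as [P1 P2].
    set (w := 1 + /f).
    assert (Hy : Nat.iter m0 oocf_T x = (w - 1)/w).
    { rewrite iter_step by (auto; lra). replace (/x - 2 * INR m0) with (1 + f) by lra.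
      unfold w. field. lra. }
    assert (Hw : w = INR (d2 + 1) + tau) by (unfold w; lra).
    split; [|split; [|split]].
    + exact P1.
    + rewrite Hy. apply inB_char; [lra|]. left. repeat split; try lia; lra.
    + intros s Hs. split; [apply P2; auto|].
      destruct (Hs m0) as [_ HB]. destruct (s m0) as [a e]. simpl in HB.
      rewrite Hy in HB. apply inB_char in HB; [|lra].
      destruct HB as [[He [Ha [H1 H2]]]|[He [Ha [H1 H2]]]].
      * subst e. f_equal. assert (a - 1 = d2 + 1)%nat; [|lia]. apply nat_close; lra.
      * exfalso. apply (nat_between (d2+1) a); lra.
    + rewrite Nat.add_1_r. simpl Nat.iter. rewrite Hy.
      rewrite (T_w w (Z.of_nat (d2 + 1))); rewrite <- ?INR_IZR_INZ; try lra.
      destruct (Rle_dec w (INR (d2 + 1) + 1 / 2)); [|lra].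
      unfold farey. destruct (Rle_dec tau (1/2)); [|lra]. rewrite Hw. field. lra.
  -
    intros Hev. apply Nat.even_spec in Hev. destruct Hev as [m1 Hm1].
    assert (Hm1p : (1 <= m1)%nat).
    { destruct m1; [|lia]. exfalso. simpl in Hm1. rewrite Hm1 in Hb1. simpl in Hb1. lra. }
    assert (Hdiv : (d1 / 2)%nat = m1).
    { rewrite Hm1, Nat.mul_comm. apply Nat.div_mul. lia. }
    cbv zeta. rewrite Hdiv.
    set (m0 := (m1 - 1)%nat).
    assert (Hd1m : INR d1 = 2 * INR m0 + 2).
    { rewrite Hm1. unfold m0. replace (2 * m1)%nat with (2 * (m1 - 1) + 2)%nat by lia.
      rewrite plus_INR, mult_INR. simpl. lra. }
    destruct (Hpre m0 ltac:(lra)) as [P1 P2].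
    set (w := (2 + f) / (1 + f)).
    assert (Hy : Nat.iter m0 oocf_T x = (w - 1)/w).
    { rewrite iter_step by (auto; lra). replace (/x - 2 * INR m0) with (2 + f) by lra.
      unfold w. field. lra. }
    assert (Hw : 3/2 < w < 2).
    { assert (E : w = 1 + /(1+f)) by (unfold w; field; lra).
      assert (/(1+f) < 1) by (rewrite <- Rinv_1; apply Rinv_lt_contravar; lra).
      assert (/2 < /(1+f)) by (apply Rinv_lt_contravar; lra). lra. }
    split; [|split; [|split]].
    + exact P1.
    + rewrite Hy. apply inB_char; [lra|]. right. simpl. repeat split; try lia; lra.
    + intros s Hs. split; [apply P2; auto|].
      destruct (Hs m0) as [_ HB]. destruct (s m0) as [a e]. simpl in HB.
      rewrite Hy in HB. apply inB_char in HB; [|lra].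
      destruct HB as [[He [Ha [H1 H2]]]|[He [Ha [H1 H2]]]].
      * exfalso. pose proof (le_INR 1 (a-1) ltac:(lia)). simpl in *.
        destruct (Nat.eq_dec (a-1) 1) as [E|E].
        { rewrite E in *. simpl in *. lra. }
        pose proof (le_INR 2 (a-1) ltac:(lia)). simpl in *. lra.
      * subst e. f_equal. apply (nat_close a 1); simpl; lra.
    + replace m1 with (S m0) by (unfold m0; lia). simpl Nat.iter. rewrite Hy.
      rewrite (T_w w 1) by (simpl; lra).
      destruct (Rle_dec w (IZR 1 + 1 / 2)); [simpl in *; lra|].
      fold f. unfold w. simpl. field. lra.
Qed.
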